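(* Let $\epsilon>0$. After $K=\tau\ln(\frac1\epsilon)$ iterations of Dual KOSZ starting from $\mathbf x^0=0$, we have $\mathcal B(\mathbf x^* )-\mathbb E[\mathcal B(\mathbf x^K)]\le\epsilon\cdot\mathcal B(\mathbf x^* )$.
   Context: $G=(V,E)$ is a connected undirected graph with resistances $r(e)>0$; $\mathbf b\in\mathbb R^V$ with $\sum_ib(i)=0$; $\mathbf L=\sum_{ij\in E}\frac1{r(i,j)}(\mathbf e_i-\mathbf e_j)(\mathbf e_i-\mathbf e_j)^\top$, $\mathcal B(\mathbf x)=\mathbf b^\top\mathbf x-\frac12\mathbf x^\top\mathbf L\mathbf x$, $\mathbf x^*$ maximizes $\mathcal B$. $T$ is a rooted spanning tree with edges directed toward the root; $C(i,j)$ is the vertex set of the component of $T-ij$ containing $i$; $R(C)=(\sum_{e\in\delta(C)}1/r(e))^{-1}$, $b(C)=\sum_{v\in C}b(v)$, $f_{\mathbf x}(C)=\sum_{kl\in E,k\in C,l\notin C}\frac{x(k)-x(l)}{r(k,l)}$; $\tau=\sum_{(i,j)\in T}\frac{r(i,j)}{R(C(i,j))}$. Dual KOSZ: $\mathbf x^0=0$; each iteration independently samples a tree edge $(i,j)$ with probability $\frac1\tau\frac{r(i,j)}{R(C(i,j))}$, and with $C=C(i,j)$ sets $\mathbf x^{t+1}=\mathbf x^t+(b(C)-f_{\mathbf x^t}(C))R(C)\mathbbm 1_C$. *)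

(* Defs.v *)
From HB Require Import structures.
From mathcomp Require Import all_boot all_order all_algebra.
From mathcomp Require Import all_classical all_reals all_analysis.
Set Implicit Arguments. Unset Strict Implicit. Unset Printing Implicit Defensive.
Import Order.TTheory GRing.Theory Num.Theory.
Local Open Scope ring_scope.

Section Defs.
Variables (R : realType) (V : finType).
(* G = (V, E): E is a symmetric irreflexive relation; r k l = resistance of edge kl. *)
Variables (E : rel V) (r : V -> V -> R) (b : V -> R).
(* Rooted spanning tree T: every non-root vertex v has tree edge (v, parent v),
   directed toward the root. *)
Variables (root : V) (parent : V -> V).

(* B(x) = b^T x - 1/2 x^T L x, with x^T L x = sum over edges {k,l} of
   (x k - x l)^2 / r(k,l); summing over ordered pairs counts each edge twice. *)
Definition quadL (x : V -> R) : R :=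
  (\sum_(k : V) \sum_(l : V | E k l) (x k - x l) ^+ 2 / r k l) / 2.
Definition Bfun (x : V -> R) : R := \sum_(v : V) b v * x v - quadL x / 2.

Definition treeAdj (u w : V) : bool :=
  ((u != root) && (parent u == w)) || ((w != root) && (parent w == u)).

(* C(i,j): vertex set of the component of T - ij containing i *)
Definition compC (i j : V) : {set V} :=
  [set v | connect (fun u w => treeAdj u w &&
                     ~~ (((u == i) && (w == j)) || ((u == j) && (w == i)))) i v].

Definition RC (C : {set V}) : R :=
  (\sum_(k in C) \sum_(l in ~: C | E k l) (r k l)^-1)^-1.
Definition bC (C : {set V}) : R := \sum_(v in C) b v.
Definition fC (x : V -> R) (C : {set V}) : R :=
  \sum_(k in C) \sum_(l in ~: C | E k l) (x k - x l) / r k l.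

Definition Ctree (i : V) : {set V} := compC i (parent i).

Definition tau : R :=
  \sum_(i : V | i != root) r i (parent i) / RC (Ctree i).

Definition prob (i : V) : R := tau^-1 * (r i (parent i) / RC (Ctree i)).

Definition kosz_step (x : V -> R) (i : V) : V -> R :=
  let C := Ctree i in
  fun v => x v + (bC C - fC x C) * RC C * (if v \in C then 1 else 0).

(* expected value of B(x^n) after n independent iterations started at x *)
Fixpoint expB (n : nat) (x : V -> R) : R :=
  match n with
  | 0 => Bfun x
  | n'.+1 => \sum_(i : V | i != root) prob i * expB n' (kosz_step x i)
  end.
End Defs.

(* Main.v *)
Require Import Defs.
From HB Require Import structures.
From mathcomp Require Import all_boot all_order all_algebra.
From mathcomp Require Import all_classical all_reals all_analysis.
From mathcomp Require Import ring lra.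
Import Order.TTheory GRing.Theory Num.Theory.
Local Open Scope ring_scope.

Section All.
Variables (R : realType) (V : finType) (E : rel V) (r : V -> V -> R) (b : V -> R).
Variables (root : V) (parent : V -> V).
Hypothesis Esym : forall u v, E u v = E v u.
Hypothesis rsym : forall u v, E u v -> r u v = r v u.
Hypothesis rpos : forall u v, E u v -> 0 < r u v.
Hypothesis bsum : \sum_(v : V) b v = 0.
Hypothesis proot : parent root = root.
Hypothesis Etree : forall v, v != root -> E v (parent v).
Hypothesis reach : forall v, exists n, iter n parent v = root.

Lemma iter_root n : iter n parent root = root.
Proof. by elim: n => //= n ->. Qed.

Lemma no2cycle k : k != root -> parent (parent k) = k -> False.
Proof.
move=> kr hk; have [n hn] := reach k.
have : (iter n parent k == k) || (iter n parent k == parent k).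
  elim: n {hn} => [|n IH] /=; first by rewrite eqxx.
  by case/orP: IH => /eqP ->; rewrite ?hk eqxx ?orbT.
rewrite hn => /orP [/eqP rk|/eqP rk]; first by rewrite rk eqxx in kr.
by move: hk; rewrite -rk proot => rk'; rewrite rk' eqxx in kr.
Qed.

Definition desc i v := exists n, iter n parent v = i.

Lemma desc_root i : i != root -> ~ desc i root.
Proof. by move=> ir [n]; rewrite iter_root => ri; rewrite ri eqxx in ir. Qed.

Lemma desc_parent i : i != root -> ~ desc i (parent i).
Proof.
move=> ir [n hn]; have hi : iter n.+1 parent i = i by rewrite iterSr.
have hm : forall m, iter (m * n.+1) parent i = i.
  elim=> [|m IH] //; by rewrite mulSn iterD IH hi.
have [m0 hm0] := reach i.
have : iter (m0 * n.+1) parent i = root.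
  have le : (m0 <= m0 * n.+1)%N by rewrite leq_pmulr.
  by rewrite -(subnK le) iterD hm0 iter_root.
by rewrite hm => ri; rewrite ri eqxx in ir.
Qed.

Definition erel (i : V) : rel V := fun u w => treeAdj root parent u w &&
                     ~~ (((u == i) && (w == parent i)) || ((u == parent i) && (w == i))).

Lemma compCE i v : (v \in Ctree root parent i) = connect (erel i) i v.
Proof. by rewrite inE. Qed.

Lemma desc_closed i u w : desc i u -> erel i u w -> desc i w.
Proof.
move=> [n hn] /andP [] /orP [/andP [ur /eqP pu]|/andP [wr /eqP pw]] hex.
- case: n hn => [|n] hn.
    by move: hex; rewrite /= in hn; rewrite -pu hn !eqxx.
  by exists n; rewrite -pu -iterSr.
- by exists n.+1; rewrite iterSr pw.
Qed.

Lemma connect_desc i v : connect (erel i) i v -> desc i v.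
Proof.
move/connectP=> [s hs ->].
have gen : forall x, desc i x -> path (erel i) x s -> desc i (last x s).
  elim: s {hs} => [|w s IH] x dx //= /andP [hxw hs].
  exact: IH (desc_closed _ _ _ dx hxw) hs.
by apply: gen hs; exists 0%N.
Qed.

Lemma C_self i : i \in Ctree root parent i.
Proof. by rewrite compCE connect0. Qed.

Lemma C_parent i : i != root -> parent i \notin Ctree root parent i.
Proof. by move=> ir; apply/negP; rewrite compCE => /connect_desc; apply: desc_parent. Qed.

Lemma C_root i : i != root -> root \notin Ctree root parent i.
Proof. by move=> ir; apply/negP; rewrite compCE => /connect_desc; apply: desc_root. Qed.

Lemma C_step i v : i != root -> v != root -> v != i ->
  (v \in Ctree root parent i) = (parent v \in Ctree root parent i).
Proof.
move=> ir vr vi.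
have nex : ~~ (((v == i) && (parent v == parent i)) || ((v == parent i) && (parent v == i))).
  rewrite (negbTE vi) /=; apply/negP => /andP [/eqP vp /eqP pv].
  by apply: (no2cycle _ ir); rewrite -vp.
have e1 : erel i v (parent v) by rewrite /erel /treeAdj vr eqxx.
have e2 : erel i (parent v) v.
  rewrite /erel /treeAdj vr eqxx orbT /=.
  by move: nex; rewrite andbC orbC [(parent v == i) && _]andbC.
rewrite !compCE; apply/idP/idP => h.
  by apply: connect_trans h (connect1 e1).
by apply: connect_trans h (connect1 e2).
Qed.

Definition T (G : V -> V -> R) : R := \sum_(k : V) \sum_(l : V | E k l) G k l.

Lemma eq_T (G1 G2 : V -> V -> R) : (forall k l, E k l -> G1 k l = G2 k l) -> T G1 = T G2.
Proof. by move=> h; apply: eq_bigr => k _; apply: eq_bigr => l; apply: h. Qed.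

Lemma T_swap G : T G = T (fun k l => G l k).
Proof.
rewrite /T (eq_bigr (fun k => \sum_l if E k l then G k l else 0)); last by move=> k _; rewrite big_mkcond.
rewrite exchange_big; apply: eq_bigr => l _; rewrite [RHS]big_mkcond; apply: eq_bigr => k _.
by rewrite Esym.
Qed.

Lemma T_add G1 G2 : T (fun k l => G1 k l + G2 k l) = T G1 + T G2.
Proof. by rewrite /T -big_split; apply: eq_bigr => k _; rewrite big_split. Qed.

Lemma T_scale c G : T (fun k l => c * G k l) = c * T G.
Proof. by rewrite /T mulr_sumr; apply: eq_bigr => k _; rewrite mulr_sumr. Qed.

Lemma T_sum (I : finType) (P : pred I) (G : I -> V -> V -> R) :
  T (fun k l => \sum_(i | P i) G i k l) = \sum_(i | P i) T (G i).
Proof.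
rewrite /T exchange_big; apply: eq_bigr => k _ /=.
by rewrite exchange_big.
Qed.

Definition bil (x y : V -> R) : R :=
  T (fun k l => (x k - x l) * (y k - y l) / r k l) / 2.

Lemma quadLT x : quadL E r x = bil x x.
Proof.
by [].
Qed.

Lemma eq_bil x y y' : (forall v, y v = y' v) -> bil x y = bil x y'.
Proof. by move=> h; rewrite /bil; congr (_ / _); apply: eq_T => k l _; rewrite !h. Qed.

Lemma quad_add x y c :
  quadL E r (fun v => x v + c * y v) = quadL E r x + 2 * c * bil x y + c ^+ 2 * quadL E r y.
Proof.
rewrite !quadLT /bil.
rewrite (eq_T _ (fun k l => ((x k - x l) * (x k - x l) / r k l +
   (2 * c) * ((x k - x l) * (y k - y l) / r k l)) +
   c ^+ 2 * ((y k - y l) * (y k - y l) / r k l))); last first.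
  by move=> k l _; rewrite /=; ring.
rewrite !T_add !T_scale; ring.
Qed.

Definition ind (C : {set V}) (v : V) : R := if v \in C then 1 else 0.

Lemma cut_sum C F : (forall k l, E k l -> F l k = - F k l) ->
  T (fun k l => F k l * (ind C k - ind C l)) =
  2 * \sum_(k in C) \sum_(l in ~: C | E k l) F k l.
Proof.
move=> hF.
pose H k l := F k l * ind C k * (1 - ind C l).
rewrite (eq_T _ (fun k l => H k l + H l k)); last first.
  move=> k l ekl; rewrite /H (hF _ _ ekl) /ind.
  by case: (k \in C); case: (l \in C); ring.
rewrite T_add (T_swap (fun k l => H l k)) /=.
have -> : T (fun k l => H k l) = \sum_(k in C) \sum_(l in ~: C | E k l) F k l.
  rewrite /T [RHS]big_mkcond; apply: eq_bigr => k _.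
  rewrite /H /ind; case: (k \in C).
    rewrite big_mkcond [RHS]big_mkcond; apply: eq_bigr => l _.
    by rewrite inE; case: (l \in C); case: (E k l) => /=; ring.
  by rewrite big1 // => l _; ring.
ring.
Qed.

Lemma bil_ind x C : bil x (ind C) = fC E r x C.
Proof.
rewrite /bil (eq_T _ (fun k l => ((x k - x l) / r k l) * (ind C k - ind C l))); last first.
  by move=> k l _; rewrite mulrAC.
rewrite cut_sum; first by rewrite /fC; field.
move=> k l ekl; rewrite (rsym _ _ ekl) -mulNr opprB //.
Qed.

Definition SC (C : {set V}) : R := \sum_(k in C) \sum_(l in ~: C | E k l) (r k l)^-1.

Lemma quad_ind C : quadL E r (ind C) = SC C.
Proof.
rewrite quadLT /bil (eq_T _ (fun k l => ((ind C k - ind C l) / r k l) * (ind C k - ind C l))); last first.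
  by move=> k l _; rewrite mulrAC.
rewrite cut_sum; last by move=> k l ekl; rewrite (rsym _ _ ekl) -mulNr opprB.
rewrite /SC mulrC mulrA mulVf ?mul1r ?pnatr_eq0 //.
apply: eq_bigr => k kC; apply: eq_bigr => l /andP [lC _].
by rewrite /ind kC; rewrite inE in lC; rewrite (negbTE lC) subr0 mul1r.
Qed.


Notation C i := (Ctree root parent i).

Lemma bC_ind A : bC b A = \sum_v b v * ind A v.
Proof.
rewrite /bC big_mkcond; apply: eq_bigr => v _; rewrite /ind.
by case: (v \in A); rewrite ?mulr1 ?mulr0.
Qed.

Lemma Bfun_add x y c : Bfun E r b (fun v => x v + c * y v) =
  Bfun E r b x + c * (\sum_v b v * y v) - c * bil x y - c ^+ 2 / 2 * quadL E r y.
Proof.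
rewrite /Bfun quad_add.
rewrite (eq_bigr (fun v => b v * x v + c * (b v * y v))); last by move=> v _; ring.
rewrite big_split /= -mulr_sumr; by field.
Qed.

Lemma step_gain x i : 0 < SC (C i) ->
  Bfun E r b (kosz_step E r b root parent x i) =
  Bfun E r b x + RC E r (C i) * (bC b (C i) - fC E r x (C i)) ^+ 2 / 2.
Proof.
move=> Sp.
have -> : kosz_step E r b root parent x i =
  (fun v => x v + ((bC b (C i) - fC E r x (C i)) * RC E r (C i)) * ind (C i) v) by [].
rewrite Bfun_add -bC_ind bil_ind quad_ind.
have -> : RC E r (C i) = (SC (C i))^-1 by [].
have : SC (C i) != 0 by rewrite gt_eqF.
move=> h; field; exact: h.
Qed.

Lemma tele_root y : \sum_(i | i != root) (y i - y (parent i)) * ind (C i) root = 0.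
Proof. by rewrite big1 // => i ir; rewrite /ind (negbTE (C_root _ ir)) mulr0. Qed.

Lemma tele y v : y v = y root + \sum_(i | i != root) (y i - y (parent i)) * ind (C i) v.
Proof.
have [n hn] := reach v; elim: n v hn => [|n IH] v hn.
  by rewrite /= in hn; rewrite hn tele_root addr0.
case: (eqVneq v root) => [->|vr]; first by rewrite tele_root addr0.
rewrite iterSr in hn; have e := IH _ hn.
rewrite (bigD1 v) //= {1}/ind C_self mulr1.
rewrite (bigD1 v) //= {1}/ind (negbTE (C_parent _ vr)) mulr0 add0r in e.
have -> : \sum_(i | (i != root) && (i != v)) (y i - y (parent i)) * ind (C i) v =
   \sum_(i | (i != root) && (i != v)) (y i - y (parent i)) * ind (C i) (parent v).
  apply: eq_bigr => i /andP [ir iv]; rewrite /ind (C_step _ _ ir vr) //.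
  by rewrite eq_sym.
lra.
Qed.

Lemma bil_lin x c (P : pred V) (a : V -> R) (g : V -> V -> R) :
  bil x (fun v => c + \sum_(i | P i) a i * g i v) = \sum_(i | P i) a i * bil x (g i).
Proof.
rewrite /bil (eq_T _ (fun k l => \sum_(i | P i) a i * ((x k - x l) * (g i k - g i l) / r k l))); last first.
  move=> k l _.
  have -> : (c + \sum_(i | P i) a i * g i k) - (c + \sum_(i | P i) a i * g i l) =
    \sum_(i | P i) (a i * g i k - a i * g i l) by rewrite sumrB; ring.
  rewrite mulr_sumr mulr_suml; apply: eq_bigr => i _; ring.
rewrite T_sum mulr_suml; apply: eq_bigr => i _; rewrite T_scale; ring.
Qed.

Lemma lin_part x y : \sum_v b v * y v - bil x y =
  \sum_(i | i != root) (y i - y (parent i)) * (bC b (C i) - fC E r x (C i)).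
Proof.
pose a i := y i - y (parent i).
have ey : forall v, y v = y root + \sum_(i | i != root) a i * ind (C i) v by move=> v; apply: tele.
rewrite (eq_bil _ _ (fun v => y root + \sum_(i | i != root) a i * ind (C i) v)) //.
rewrite bil_lin.
rewrite (eq_bigr (fun v => y root * b v + \sum_(i | i != root) a i * (b v * ind (C i) v))); last first.
  move=> v _; rewrite {1}ey mulrDr mulrC; congr (_ + _); rewrite mulr_sumr.
  by apply: eq_bigr => i _; ring.
rewrite big_split /= -mulr_sumr bsum mulr0 add0r exchange_big /=.
rewrite -sumrB; apply: eq_bigr => i _; rewrite -mulr_sumr bC_ind bil_ind /a; ring.
Qed.
Lemma tree_E k l : treeAdj root parent k l -> E k l.
Proof.
case/orP => /andP [kr /eqP <-]; first exact: Etree.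
by rewrite Esym; apply: Etree.
Qed.

Lemma tree_lb y : \sum_(i | i != root) (y i - y (parent i)) ^+ 2 / r i (parent i) <= quadL E r y.
Proof.
pose g k l := (y k - y l) ^+ 2 / r k l.
have g0 : forall k l, E k l -> 0 <= g k l.
  by move=> k l ekl; rewrite /g divr_ge0 ?sqr_ge0 // ltW // rpos.
have gs : forall k l, E k l -> g l k = g k l.
  by move=> k l ekl; rewrite /g (rsym _ _ ekl) -sqrrN opprB.
have -> : quadL E r y = T g / 2 by [].
have step1 : \sum_k \sum_(l | treeAdj root parent k l) g k l <= T g.
  apply: ler_sum => k _; rewrite big_mkcond [X in _ <= X]big_mkcond.
  apply: ler_sum => l _; case tA: (treeAdj root parent k l).
    by rewrite (tree_E _ _ tA).
  by case ekl: (E k l) => //; apply: g0.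
have step2 : forall k, \sum_(l | treeAdj root parent k l) g k l =
   (if k != root then g k (parent k) else 0) +
   \sum_l (if (l != root) && (parent l == k) then g k l else 0).
  move=> k.
  have -> : (if k != root then g k (parent k) else 0) =
     \sum_l (if (k != root) && (parent k == l) then g k l else 0).
    case: (k != root) => /=; last by rewrite big1.
    rewrite -big_mkcond (big_pred1 (parent k)) // => l /=; exact: eq_sym.
  rewrite -big_split big_mkcond; apply: eq_bigr => l _ /=.
  rewrite /treeAdj.
  case h1: ((k != root) && (parent k == l)); case h2: ((l != root) && (parent l == k)) => /=;
    rewrite ?addr0 ?add0r //.
  move/andP: h1 => [kr /eqP pk]; move/andP: h2 => [lr /eqP pl].
  by exfalso; apply: (no2cycle _ kr); rewrite pk pl.
have step3 : \sum_k \sum_l (if (l != root) && (parent l == k) then g k l else 0) =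
    \sum_(l | l != root) g l (parent l).
  rewrite exchange_big [RHS]big_mkcond; apply: eq_bigr => l _ /=.
  case lr: (l != root) => /=; last by rewrite big1.
  rewrite -big_mkcond (big_pred1 (parent l)); try (by move=> k /=; exact: eq_sym).
  by apply: gs; apply: Etree.
have step4 : \sum_k (if k != root then g k (parent k) else 0) = \sum_(k | k != root) g k (parent k).
  by rewrite [RHS]big_mkcond.
move: step1; rewrite (eq_bigr _ (fun k _ => step2 k)) big_split /= step3 step4 => h.
have -> : \sum_(i | i != root) (y i - y (parent i)) ^+ 2 / r i (parent i) =
  \sum_(k | k != root) g k (parent k) by [].
lra.
Qed.

Lemma gap x z : Bfun E r b z - Bfun E r b x <=
  \sum_(i | i != root) r i (parent i) * (bC b (C i) - fC E r x (C i)) ^+ 2 / 2.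
Proof.
pose y v := z v - x v.
have -> : z = (fun v => x v + 1 * y v) by apply/funext => v; rewrite /y; ring.
rewrite Bfun_add !mul1r expr1n.
have hl := lin_part x y.
have ht := tree_lb y.
have h : \sum_v b v * y v - bil x y - quadL E r y / 2 <=
  \sum_(i | i != root) ((y i - y (parent i)) * (bC b (C i) - fC E r x (C i)) -
      (y i - y (parent i)) ^+ 2 / r i (parent i) / 2).
  rewrite sumrB -mulr_suml hl.
  have : 0 <= 2^-1 :> R by rewrite invr_ge0.
  move=> h2; have := ler_wpM2r h2 ht; lra.
apply: (le_trans _ (le_trans h _)); first by lra.
apply: ler_sum => i ir.
set a := y i - _; set d := bC b _ - _; set ri := r i (parent i).
have rp : 0 < ri by apply: rpos; apply: Etree.
rewrite -subr_ge0.
have -> : ri * d ^+ 2 / 2 - (a * d - a ^+ 2 / ri / 2) = (ri * d - a) ^+ 2 / (2 * ri).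
  by field; rewrite gt_eqF.
by rewrite divr_ge0 ?sqr_ge0 // mulr_ge0 // ltW.
Qed.
Lemma SC_ge i : i != root -> (r i (parent i))^-1 <= SC (C i).
Proof.
move=> ir; rewrite /SC (bigD1 i) ?C_self //= (bigD1 (parent i)) /=; last first.
  by rewrite inE C_parent // Etree.
have h1 : 0 <= \sum_(l | (l \in ~: C i) && E i l && (l != parent i)) (r i l)^-1.
  by apply: sumr_ge0 => l /andP [/andP [_ eil] _]; rewrite invr_ge0 ltW // rpos.
have h2 : 0 <= \sum_(k in C i | k != i) \sum_(l in ~: C i | E k l) (r k l)^-1.
  apply: sumr_ge0 => k _; apply: sumr_ge0 => l /andP [_ ekl].
  by rewrite invr_ge0 ltW // rpos.
lra.
Qed.

Lemma rSC_ge i : i != root -> 1 <= r i (parent i) * SC (C i).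
Proof.
move=> ir; have rp : 0 < r i (parent i) by apply: rpos; apply: Etree.
have := SC_ge _ ir => h.
have := ler_wpM2l (ltW rp) h; rewrite mulfV ?gt_eqF //.
Qed.

Lemma SC_pos i : i != root -> 0 < SC (C i).
Proof.
move=> ir; have rp : 0 < r i (parent i) by apply: rpos; apply: Etree.
by apply: lt_le_trans (SC_ge _ ir); rewrite invr_gt0.
Qed.

Lemma tauE : tau E r root parent = \sum_(i | i != root) r i (parent i) * SC (C i).
Proof. by rewrite /tau; apply: eq_bigr => i _; rewrite /RC invrK. Qed.

Section NonTrivial.
Variable i0 : V.
Hypothesis i0r : i0 != root.

Lemma tau_ge1 : 1 <= tau E r root parent.
Proof.
rewrite tauE (bigD1 i0) //=.
have h : 0 <= \sum_(i | (i != root) && (i != i0)) r i (parent i) * SC (C i).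
  apply: sumr_ge0 => i /andP [ir _]; rewrite mulr_ge0 // ?ltW ?SC_pos //.
  by apply: rpos; apply: Etree.
have := rSC_ge _ i0r; lra.
Qed.

Lemma prob_sum : \sum_(i | i != root) prob E r root parent i = 1.
Proof.
rewrite /prob -mulr_sumr -/(tau E r root parent) mulVf //.
by apply: lt0r_neq0; apply: lt_le_trans tau_ge1.
Qed.

Lemma prob_ge0 i : i != root -> 0 <= prob E r root parent i.
Proof.
move=> ir; rewrite /prob mulr_ge0 // ?invr_ge0.
  by apply: le_trans tau_ge1.
rewrite /RC invrK mulr_ge0 // ?ltW ?SC_pos //; by apply: rpos; apply: Etree.
Qed.

Lemma avg (f : V -> R) (c : R) : \sum_(i | i != root) prob E r root parent i * (c - f i) =
   c - \sum_(i | i != root) prob E r root parent i * f i.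
Proof.
rewrite (eq_bigr (fun i => prob E r root parent i * c - prob E r root parent i * f i)); last by move=> i _; ring.
by rewrite sumrB -mulr_suml prob_sum mul1r.
Qed.

Lemma exp_step x : \sum_(i | i != root) prob E r root parent i * Bfun E r b (kosz_step E r b root parent x i) =
  Bfun E r b x + (tau E r root parent)^-1 *
    \sum_(i | i != root) r i (parent i) * (bC b (C i) - fC E r x (C i)) ^+ 2 / 2.
Proof.
rewrite (eq_bigr (fun i => prob E r root parent i * Bfun E r b x +
   (tau E r root parent)^-1 * (r i (parent i) * (bC b (C i) - fC E r x (C i)) ^+ 2 / 2))); last first.
  move=> i ir; rewrite step_gain ?SC_pos // /prob /RC invrK.
  have : SC (C i) != 0 by rewrite gt_eqF // SC_pos.
  have ht : tau E r root parent != 0 by apply: lt0r_neq0; apply: lt_le_trans tau_ge1.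
  move=> h; field; apply/andP; split; [exact: ht | exact: h].
by rewrite big_split /= -mulr_suml prob_sum mul1r -mulr_sumr.
Qed.

Lemma recur xs : (forall x, Bfun E r b x <= Bfun E r b xs) ->
  forall n x, Bfun E r b xs - expB E r b root parent n x <=
     (1 - (tau E r root parent)^-1) ^+ n * (Bfun E r b xs - Bfun E r b x).
Proof.
move=> xopt n; elim: n => [|n IH] x; first by rewrite /= expr0 mul1r.
set q := 1 - _.
have t1 := tau_ge1.
have q0 : 0 <= q.
  rewrite /q subr_ge0 invf_le1 //; lra.
have qn0 : 0 <= q ^+ n by apply: exprn_ge0.
rewrite /= -avg.
apply: (le_trans (y := \sum_(i | i != root) prob E r root parent i *
   (q ^+ n * (Bfun E r b xs - Bfun E r b (kosz_step E r b root parent x i))))).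
  apply: ler_sum => i ir; apply: ler_wpM2l; [exact: prob_ge0 | exact: IH].
rewrite (eq_bigr (fun i => q ^+ n * (prob E r root parent i *
   (Bfun E r b xs - Bfun E r b (kosz_step E r b root parent x i))))); last by move=> i _; ring.
rewrite -mulr_sumr avg exp_step exprS.
have g := gap x xs.
set S := \sum_(i | i != root) _ in g *.
have ti0 : 0 <= (tau E r root parent)^-1 by rewrite invr_ge0; lra.
rewrite [q * _]mulrC -mulrA; apply: ler_wpM2l => //.
rewrite /q; have := ler_wpM2l ti0 g; lra.
Qed.

End NonTrivial.
Lemma B0 : Bfun E r b (fun _ => 0) = 0.
Proof.
have hq : quadL E r (fun _ => 0) = 0.
  rewrite /quadL big1 ?mul0r // => k _; rewrite big1 // => l _.
  by rewrite subrr expr0n /= mul0r.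
by rewrite /Bfun hq big1 ?mul0r ?subr0 // => v _; rewrite mulr0.
Qed.

Lemma final xs eps K : (forall x, Bfun E r b x <= Bfun E r b xs) -> 0 < eps ->
  tau E r root parent * ln (eps^-1) <= K%:R ->
  Bfun E r b xs - expB E r b root parent K (fun _ => 0) <= eps * Bfun E r b xs.
Proof.
move=> xopt epos hK.
have Bs0 : 0 <= Bfun E r b xs by rewrite -B0; apply: xopt.
case: (pickP (fun i => i != root)) => [i0 i0r | none].
  have := recur _ i0r _ xopt K (fun _ => 0); rewrite B0 subr0 => h.
  apply: (le_trans h); apply: ler_wpM2r => //.
  set t := tau E r root parent.
  have t1 : 1 <= t := tau_ge1 _ i0r.
  have ti0 : 0 <= t^-1 by rewrite invr_ge0; lra.
  have q0 : 0 <= 1 - t^-1 by rewrite subr_ge0 invf_le1 //; lra.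
  have qle : 1 - t^-1 <= expR (- t^-1) by have := expR_ge1Dx (- t^-1).
  have h1 : (1 - t^-1) ^+ K <= expR (- t^-1) ^+ K.
    by apply: lerXn2r; rewrite ?nnegrE ?expR_ge0.
  apply: (le_trans h1); rewrite -expRM_natl.
  have ep : eps \in Num.pos by rewrite posrE.
  rewrite -[X in _ <= X](lnK ep) ler_expR.
  rewrite (lnV ep) in hK.
  have := ler_wpM2l ti0 hK; rewrite mulrA mulVf ?mul1r; last by apply: lt0r_neq0; lra.
  move=> h2; nra.
have P0 : (fun i => i != root) =1 xpred0 by move=> i; rewrite none.
have g := gap (fun _ => 0) xs; rewrite big_pred0 // B0 subr0 in g.
have Bz : Bfun E r b xs = 0 by apply: le_anti; rewrite g Bs0.
have Ez : expB E r b root parent K (fun _ => 0) = 0.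
  by case: K hK => [|K] _ /=; [exact: B0 | rewrite big_pred0].
by rewrite Bz Ez subr0 mulr0.
Qed.

End All.

Theorem mainTheorem13 (R : realType) (V : finType)
  (E : rel V) (r : V -> V -> R) (b : V -> R) (root : V) (parent : V -> V)
  (xstar : V -> R) (eps : R) (K : nat) :
  (* G is a connected undirected (simple) graph with positive resistances *)
  (forall u v, E u v = E v u) ->
  (forall u, ~~ E u u) ->
  (forall u v, E u v -> r u v = r v u) ->
  (forall u v, E u v -> 0 < r u v) ->
  (forall u v, connect E u v) ->
  (* b sums to zero *)
  \sum_(v : V) b v = 0 ->
  (* T is a spanning tree of G rooted at root, edges (v, parent v) toward root *)
  parent root = root ->
  (forall v, v != root -> E v (parent v)) ->
  (forall v, exists n, iter n parent v = root) ->
  (* xstar maximizes B *)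
  (forall x, Bfun E r b x <= Bfun E r b xstar) ->
  0 < eps ->
  tau E r root parent * ln (eps^-1) <= K%:R ->
  Bfun E r b xstar - expB E r b root parent K (fun _ => 0)
    <= eps * Bfun E r b xstar.
Proof.
move=> hEs hEi hrs hrp hconn hb hpr hEt hre hopt he hK.
by eapply final; eassumption.
Qed.
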